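(* Fix $\Delta>1$ and a known upper bound $D$ on the sparsity. Let $M\in\mathbb{F}^{m\times n}$ be a matrix such that there exists a (deterministic) decoder which, from observing only $\mathbf{b}=M\odot\mathbf{x}$, produces a $\Delta$-approximation $\hat d$ of $d=\|\mathbf{x}\|_0$ for any $\mathbf{x}\in\mathbb{F}^n$ with $d\le D$. Then for any two vectors $\mathbf{v}_1,\mathbf{v}_2\in\mathbb{F}^n$ with $\|\mathbf{v}_2\|_0\le\|\mathbf{v}_1\|_0\le D$, $M$ must have the property $$\frac{\|\mathbf{v}_1\|_0}{\|\mathbf{v}_2\|_0}>\Delta^2\ \Longrightarrow\ M\odot\mathbf{v}_1\neq M\odot\mathbf{v}_2.$$ Conversely, for any matrix $M$ satisfying this property, there exists a decoder producing from $\mathbf{b}=M\odot\mathbf{x}$ an estimate $\hat d$ satisfying $\frac{1}{\Delta}\le\frac{\hat d}{d}\le\Delta$.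
   Context: $\|\mathbf{x}\|_0$ denotes the number of nonzero entries (sparsity) of $\mathbf{x}$. The measurement operation $\odot$ is one of: (i) $\mathbb{F}=\mathbb{F}_2$ and $\odot$ is logical OR, i.e. $(M\odot\mathbf{x})_i=\bigvee_{j:M_{ij}=1}\mathbf{x}_j$ (group testing); or (ii) $\mathbb{F}$ is a finite field or $\mathbb{R}$ and $M\odot\mathbf{x}$ is the ordinary matrix-vector product over $\mathbb{F}$. A decoder is a deterministic function of the observed vector $\mathbf{b}$; an estimate $\hat d$ is a $\Delta$-approximation of $d$ if $\frac{1}{\Delta}\le \frac{\hat d}{d}\le\Delta$. *)

(* Defs.v *)
From HB Require Import structures.
From mathcomp Require Import all_boot all_order all_algebra.
Set Implicit Arguments. Unset Strict Implicit. Unset Printing Implicit Defensive.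
Import Order.TTheory GRing.Theory Num.Theory.
Local Open Scope ring_scope.

Definition spars (T : eqType) (z : T) (n : nat) (x : 'cV[T]_n) : nat :=
  #|[pred j : 'I_n | x j 0 != z]|.

(* Group testing measurement: (M (.) x)_i = OR_{j : M_ij = 1} x_j over F_2 = bool. *)
Definition or_mul (m n : nat) (M : 'M[bool]_(m, n)) (x : 'cV[bool]_n) : 'cV[bool]_m :=
  \col_i [exists j, M i j && x j 0].

(* dhat is a Delta-approximation of d: 1/Delta <= dhat/d <= Delta,
   cross-multiplied (d > 0 and Delta > 0), so that for d = 0 it forces dhat = 0. *)
Definition approx (R : realFieldType) (Delta : R) (d : nat) (dhat : R) : Prop :=
  d%:R / Delta <= dhat /\ dhat <= Delta * d%:R.

Definition decodable (T : eqType) (z : T) (m n : nat)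
    (meas : 'cV[T]_n -> 'cV[T]_m) (R : realFieldType) (Delta : R) (D : nat) : Prop :=
  exists dec : 'cV[T]_m -> R,
    forall x : 'cV[T]_n, (spars z x <= D)%N -> approx Delta (spars z x) (dec (meas x)).

(* The separation property: for ||v2||_0 <= ||v1||_0 <= D,
   ||v1||_0 / ||v2||_0 > Delta^2  ==>  M (.) v1 <> M (.) v2
   (ratio cross-multiplied: ||v1||_0 > Delta^2 * ||v2||_0). *)
Definition separating (T : eqType) (z : T) (m n : nat)
    (meas : 'cV[T]_n -> 'cV[T]_m) (R : realFieldType) (Delta : R) (D : nat) : Prop :=
  forall v1 v2 : 'cV[T]_n,
    (spars z v2 <= spars z v1)%N -> (spars z v1 <= D)%N ->
    Delta ^+ 2 * (spars z v2)%:R < (spars z v1)%:R ->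
    meas v1 <> meas v2.

(* Main.v *)
Require Import Defs.
From HB Require Import structures.
From mathcomp Require Import all_boot all_order all_algebra.
From Stdlib Require Import ClassicalEpsilon.
Import Order.TTheory GRing.Theory Num.Theory.
Local Open Scope ring_scope.

Definition pb (P : Prop) : bool :=
  if excluded_middle_informative P then true else false.

Lemma pbP (P : Prop) : pb P <-> P.
Proof. rewrite /pb; case: excluded_middle_informative => //; split => //. Qed.

Lemma general (T : eqType) (z : T) (m n : nat) (meas : 'cV[T]_n -> 'cV[T]_m)
  (R : realFieldType) (Delta : R) (D : nat) (hDelta : 1 < Delta) :
  (decodable z meas Delta D -> separating z meas Delta D) /\
  (separating z meas Delta D -> decodable z meas Delta D).
Proof.
have D0 : 0 < Delta by apply: lt_trans hDelta.
split.
  move=> [dec Hd] v1 v2 h21 h1 hlt heq.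
  have h2 : (spars z v2 <= D)%N by apply: leq_trans h1.
  have [a1 _] := Hd v1 h1.
  have [_ a2] := Hd v2 h2.
  rewrite heq in a1.
  have := le_trans a1 a2.
  rewrite ler_pdivrMr // => H.
  have H' : ((spars z v1)%:R <= Delta ^+ 2 * (spars z v2)%:R :> R).
    move: H; rewrite expr2 -mulrA mulrC (mulrC Delta).
    move=> H1; exact: H1.
  by move: hlt; rewrite ltNge H'.
move=> Hs.
pose P (b : 'cV[T]_m) (k : nat) :=
  pb (exists x, meas x = b /\ spars z x = k /\ (spars z x <= D)%N).
exists (fun b => match excluded_middle_informative (exists k, P b k) with
  | left e => Delta * (ex_minn e)%:R | right _ => 0 end).
move=> x hx.
case: excluded_middle_informative => [e|ne]; last first.
  by exfalso; apply: ne; exists (spars z x); apply/pbP; exists x.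
case: ex_minnP => lo /pbP [v [hv [<- hvD]]] hmin.
have hle : (spars z v <= spars z x)%N by apply: hmin; apply/pbP; exists x.
have hsep : ~ (Delta ^+ 2 * (spars z v)%:R < (spars z x)%:R).
  by move=> hlt; apply: (Hs x v hle hx hlt); rewrite hv.
move/negP: hsep; rewrite -leNgt => hsep.
split.
  by rewrite ler_pdivrMr // mulrC mulrA -expr2.
by rewrite ler_pM2l // ler_nat.
Qed.

Theorem theorem1 (R : realFieldType) (Delta : R) (D : nat) (hDelta : 1 < Delta) :
  (* case (ii): F a field, ordinary matrix-vector product *)
  (forall (F : fieldType) (m n : nat) (M : 'M[F]_(m, n)),
      (decodable 0 (mulmx M) Delta D -> separating 0 (mulmx M) Delta D) /\
      (separating 0 (mulmx M) Delta D -> decodable 0 (mulmx M) Delta D)) /\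
  (* case (i): group testing over F_2 = bool with logical OR *)
  (forall (m n : nat) (M : 'M[bool]_(m, n)),
      (decodable false (or_mul M) Delta D -> separating false (or_mul M) Delta D) /\
      (separating false (or_mul M) Delta D -> decodable false (or_mul M) Delta D)).
Proof.
split.
  by move=> F m n M; apply: general.
by move=> m n M; apply: general.
Qed.
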